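(* Let $T$ be a $C_{p^rq^s}$-transfer system with exactly two connected components. Then the connected component of $(0,0)$ is either $V_\ell$ for some $0\le\ell<r$, or $H_k$ for some $0\le k<s$, or $L_{(\ell,k)}$ for some $0\le \ell<r$ and $0\le k<s$.
   Context: $p,q$ are distinct primes and $r,s\ge 0$ integers. The subgroups of $C_{p^rq^s}$ are identified with grid points $(i,j)$, $0\le i\le r$, $0\le j\le s$, where $(i,j)$ stands for $C_{p^iq^j}$. A $C_{p^rq^s}$-transfer system is a partial order $\to$ on these vertices such that: $(i_1,j_1)\to(i_2,j_2)$ implies $i_1\le i_2$, $j_1\le j_2$; it is reflexive and transitive; and $(i_1,j_1)\to(i_2,j_2)$ implies $(\min\{i_1,a\},\min\{j_1,b\})\to(\min\{i_2,a\},\min\{j_2,b\})$ for every vertex $(a,b)$. Connected components are those of the underlying undirected graph. Define $V_\ell=\{(i,j): 0\le i\le \ell,\ 0\le j\le s\}$ (for $\ell<r$), $H_k=\{(i,j): 0\le i\le r,\ 0\le j\le k\}$ (for $k<s$), and $L_{(\ell,k)}=V_\ell\cup H_k$. *)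

(* Defs.v *)
From mathcomp Require Import all_boot.
Set Implicit Arguments. Unset Strict Implicit. Unset Printing Implicit Defensive.

(* Vertex (i,j) with 0 <= i <= r, 0 <= j <= s stands for the subgroup C_{p^i q^j}. *)
Definition vert (r s : nat) := ('I_r.+1 * 'I_s.+1)%type.

Definition ord_min n (i j : 'I_n) : 'I_n := if (i <= j)%N then i else j.

Definition vmin r s (x a : vert r s) : vert r s :=
  (ord_min x.1 a.1, ord_min x.2 a.2).

Definition vle r s (x y : vert r s) : bool := (x.1 <= y.1)%N && (x.2 <= y.2)%N.

(* A C_{p^r q^s}-transfer system: a partial order refining the grid order,
   closed under restriction (meets with arbitrary vertices). *)
Definition transfer_system r s (T : rel (vert r s)) : Prop :=
  [/\ (forall x, T x x),
      (forall x y z, T x y -> T y z -> T x z),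
      (forall x y, T x y -> T y x -> x = y),
      (forall x y, T x y -> vle x y) &
      (forall x y a, T x y -> T (vmin x a) (vmin y a))].

Definition undirected r s (T : rel (vert r s)) : rel (vert r s) :=
  fun x y => T x y || T y x.

Definition component r s (T : rel (vert r s)) (x : vert r s) : {set vert r s} :=
  [set y | connect (undirected T) x y].

Definition components r s (T : rel (vert r s)) : {set {set vert r s}} :=
  [set component T x | x : vert r s].

Definition origin r s : vert r s := (ord0, ord0).

Definition V_set r s (l : nat) : {set vert r s} := [set x : vert r s | (x.1 <= l)%N].
Definition H_set r s (k : nat) : {set vert r s} := [set x : vert r s | (x.2 <= k)%N].
Definition L_set r s (l k : nat) : {set vert r s} := V_set r s l :|: H_set r s k.

(* Main.v *)
Require Import Defs.
From mathcomp Require Import all_boot.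
From mathcomp Require Import zify.

Section Aux.
Variables (r s : nat) (T : rel (vert r s)).
Hypothesis HT : transfer_system T.
Let E := undirected T.

Lemma E_sym : symmetric E.
Proof. by move=> x y; rewrite /E /undirected orbC. Qed.

Lemma csym (x y : vert r s) : connect E x y = connect E y x.
Proof. exact: (sym_connect_sym E_sym). Qed.

Lemma restr (x y a : vert r s) : connect E x y -> connect E (vmin x a) (vmin y a).
Proof.
case: HT => _ _ _ _ Hr.
move/connectP=> [p Hp ->]; elim: p x Hp => [|z p IH] x /=; first by move=> _; exact: connect0.
move=> /andP [Hxz Hp]; apply: connect_trans (IH _ Hp).
apply: connect1; rewrite /E /undirected in Hxz *.
by case/orP: Hxz => H; apply/orP; [left|right]; apply: Hr.
Qed.

Lemma vmin_id (x y : vert r s) : vle y x -> vmin x y = y.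
Proof.
case: x y => [a b] [c d] /andP /= [H1 H2]; rewrite /vmin /ord_min /=.
congr pair.
  case: leqP => h //; apply: val_inj => /=; lia.
case: leqP => h //; apply: val_inj => /=; lia.
Qed.

Lemma vmin0 (a : vert r s) : vmin (origin r s) a = origin r s.
Proof. by rewrite /vmin /ord_min /origin. Qed.

Lemma vmin_self (x : vert r s) : vmin x x = x.
Proof. by case: x => a b; rewrite /vmin /ord_min /= !leqnn. Qed.

End Aux.
Arguments restr {r s T} HT {x y} a.
Arguments csym {r s T}.
Arguments vmin_id {r s}.
Arguments vmin0 {r s}.
Arguments vmin_self {r s}.

Theorem mainTheorem13 (p q r s : nat) (T : rel (vert r s)) :
  prime p -> prime q -> p <> q ->
  transfer_system T ->
  #|components T| = 2 ->
  (exists2 l, (l < r)%N & component T (origin r s) = V_set r s l) \/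
  (exists2 k, (k < s)%N & component T (origin r s) = H_set r s k) \/
  (exists l k, [/\ (l < r)%N, (k < s)%N & component T (origin r s) = L_set r s l k]).
Proof.
move=> _ _ _ HT Hcard.
set E := undirected T.
set o := origin r s.
set C := component T o.
have inC z : (z \in C) = connect E o z by rewrite inE.
have compE x y : connect E x y -> component T x = component T y.
  move=> Hxy; apply/setP => z; rewrite !inE; apply/idP/idP => H.
    by apply: connect_trans H; rewrite csym.
  exact: connect_trans Hxy H.
have Cdown y z : y \in C -> vle z y -> z \in C.
  rewrite !inC => Hy Hz; have := restr HT z Hy.
  by rewrite vmin0 vmin_id.
have [w Hw] : exists w, w \notin C.
  apply/existsP; apply: contraT; rewrite negb_exists => /forallP Hall.
  suff : components T = [set C] by move=> h; rewrite h cards1 in Hcard.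
  apply/setP => X; rewrite inE; apply/imsetP/eqP => [[x _ ->]|->].
    by apply: compE; rewrite csym -inC; move: (Hall x); rewrite negbK.
  by exists o.
have inD z : z \notin C -> connect E w z.
  move=> Hz.
  have Cin : C \in components T by apply/imsetP; exists o.
  have := cardsD1 C (components T); rewrite Cin Hcard => [[]] /esym /eqP /cards1P [X HX].
  have mem x : x \notin C -> component T x = X.
    move=> Hx; apply/set1P; rewrite -HX !inE; apply/andP; split.
      apply/eqP => Hc; move: Hx; rewrite -Hc inE; by rewrite connect0.
    by apply/imsetP; exists x.
  have := mem z Hz; rewrite -(mem w Hw) => Hc.
  have : z \in component T z by rewrite inE connect0.
  by rewrite Hc inE.
pose P := fun x : vert r s => x \notin C.
case: (@arg_minnP _ w P (fun x => x.1 + x.2)%N Hw) => m Hm Hmin.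
have Hmle y : y \notin C -> vle m y.
  move=> Hy.
  have Hmy : connect E m y by apply: connect_trans (inD _ Hy); rewrite csym; exact: inD.
  have H1 := restr HT y Hmy; rewrite vmin_self in H1.
  have Hv : vmin m y \notin C.
    apply/negP; rewrite inC => H2; move: Hy; rewrite inC.
    by move/negP; apply; apply: connect_trans H2 H1.
  have := Hmin _ Hv; case: m {Hm Hmin Hmy H1 Hv} => [a b]; case: y {Hy} => [c d].
  rewrite /vle /vmin /ord_min /=.
  move=> H; apply/andP; split; move: H; case: (leqP a c); case: (leqP b d) => /= *; lia.
have charC z : (z \in C) = ~~ vle m z.
  apply/idP/idP => H.
    by apply/negP => Hz; move: Hm; rewrite /P (Cdown _ _ H Hz).
  by apply: contraT => Hz; move: H; rewrite Hmle.
have m0 : (0 < m.1) || (0 < m.2).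
  move: Hm; rewrite /P; apply: contraR => Hab.
  apply: (Cdown o); first by rewrite inE connect0.
  by move: Hab; rewrite /vle /o /origin /= negb_or -!leqNgt.
case: m Hm Hmin Hmle charC m0 => [[a ha] [b hb]] /= _ _ _ charC m0.
case: (posnP a) => [a0|apos].
  right; left; exists b.-1; first lia.
  apply/setP => z; rewrite charC inE /vle /=; case: z => [[x hx] [y hy]] /=.
  apply/idP/idP; lia.
case: (posnP b) => [b0|bpos].
  left; exists a.-1; first lia.
  apply/setP => z; rewrite charC inE /vle /=; case: z => [[x hx] [y hy]] /=.
  apply/idP/idP; lia.
right; right; exists a.-1, b.-1; split; try lia.
apply/setP => z; rewrite charC !inE /vle /=; case: z => [[x hx] [y hy]] /=.
apply/idP/idP; lia.
Qed.
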